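(* Let $\vec{p}\in\Delta^n$ and let $\mathcal{D}=\mathrm{Mul}_k(\vec{p})$. Then $\mathcal{D}$ is $(k,\infty)$-explicitly bounded with variance proxy $8/k$; that is, for every even $s$ with $2\le s\le k$, $$\{v_i^2=1\ \forall i\in[n]\}\ \vdash_{s}\ \mathbb{E}_{Y\sim\mathcal{D}}\big[\langle Y-\vec{p},v\rangle^s\big]\le (8s/k)^{s/2},$$ where this is regarded as a polynomial inequality in the formal variables $v_1,\dots,v_n$.
   Context: $\Delta^n\subset\mathbb{R}^n$ is the simplex of nonnegative vectors with coordinates summing to 1. For $\vec{p}\in\Delta^n$, $\mathrm{Mul}_k(\vec{p})$ is the distribution of the frequency vector $Y\in\Delta^n$, $Y_j=\frac1k\#\{\nu\le k: Z_\nu=j\}$, where $Z_1,\dots,Z_k$ are i.i.d. draws from $\vec{p}$; its mean is $\vec{p}$. For polynomials in formal variables $v$, the notation $\{q_1=0,\dots,q_m=0\}\vdash_d f\ge 0$ (a degree-$d$ sum-of-squares proof) means there exist polynomials $s_1,\dots,s_m$ and a sum-of-squares polynomial $r$ such that $f=\sum_i s_iq_i + r$ with $\deg(s_iq_i)\le d$ for all $i$ and $\deg r\le d$. A distribution $\mathcal{D}$ on $\mathbb{R}^n$ with mean $\mu$ is $(t,\infty)$-explicitly bounded with variance proxy $\sigma$ if for every even $2\le s\le t$, $\{v_i^2=1\ \forall i\in[n]\}\vdash_s \mathbb{E}_{Y\sim\mathcal{D}}[\langle Y-\mu,v\rangle^s]\le(\sigma s)^{s/2}$. *)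

(* Defs.v *)
From HB Require Import structures.
From mathcomp Require Import all_boot all_order all_algebra.
From mathcomp Require Import reals.
From mathcomp Require Import mpoly.
Set Implicit Arguments. Unset Strict Implicit. Unset Printing Implicit Defensive.
Import Order.TTheory GRing.Theory Num.Theory.
Local Open Scope ring_scope.

Definition in_simplex (R : realType) (n : nat) (p : 'I_n -> R) : Prop :=
  (forall i, 0 <= p i) /\ \sum_(i < n) p i = 1.

Definition freq (R : realType) (n k : nat) (z : {ffun 'I_k -> 'I_n}) (j : 'I_n) : R :=
  (#|[set nu | z nu == j]|)%:R / k%:R.

(* E_{Y ~ Mul_k(p)} [ <Y - p, v>^s ] as a polynomial in formal variables v:
   expectation over k i.i.d. draws Z_1..Z_k from p *)
Definition mul_moment (R : realType) (n k : nat) (p : 'I_n -> R) (s : nat)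
  : {mpoly R[n]} :=
  \sum_(z : {ffun 'I_k -> 'I_n})
     (\prod_(nu < k) p (z nu)) *: (\sum_(j < n) (freq R z j - p j) *: 'X_j) ^+ s.

(* {q_1 = 0, ..., q_m = 0} |-_d f >= 0 : f = sum_i s_i q_i + r with
   deg (s_i q_i) <= d, r a sum of squares of degree <= d.
   (msize P = total degree of P + 1, and 0 for P = 0.) *)
Definition sos_proves (R : realType) (n m d : nat) (q : 'I_m -> {mpoly R[n]})
  (f : {mpoly R[n]}) : Prop :=
  exists (s : 'I_m -> {mpoly R[n]}) (gs : seq {mpoly R[n]}),
    [/\ f = \sum_(i < m) s i * q i + \sum_(g <- gs) g ^+ 2,
        (forall i, (msize (s i * q i) <= d.+1)%N)
      & (msize (\sum_(g <- gs) g ^+ 2) <= d.+1)%N].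

Definition cube_axioms (R : realType) (n : nat) : 'I_n -> {mpoly R[n]} :=
  fun i => 'X_i ^+ 2 - 1.

(* Main.v *)
Require Import Defs.
From HB Require Import structures.
From mathcomp Require Import all_boot all_order all_algebra.
From mathcomp Require Import reals.
From mathcomp Require Import mpoly.
From mathcomp Require Import ring zify.
Set Implicit Arguments. Unset Strict Implicit. Unset Printing Implicit Defensive.
Import Order.TTheory GRing.Theory Num.Theory.
Lemma binC r l : (l <= r)%N -> ('C(r.*2, l.*2) <= 'C(r, l) * (4 * r) ^ l)%N.
Proof.
elim: l => [|l ih] hl; first by rewrite !bin0 expn0.
have hl' : (l <= r)%N by apply: ltnW.
have IH := ih hl'.
have h1 := mul_bin_left r.*2 l.*2.
have h2 := mul_bin_left r.*2 l.*2.+1.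
have h3 := mul_bin_left r l.
rewrite doubleS expnS.
move: IH h1 h2 h3.
set a := 'C(r.*2, l.*2); set b := 'C(r.*2, l.*2.+1); set c := 'C(r.*2, l.*2.+2).
set u := 'C(r, l); set v := 'C(r, l.+1); set y := ((4 * r) ^ l)%N.
move=> IH h1 h2 h3.
have key : (c * ((l.*2.+1) * (l.*2.+2)) <= v * (4 * r * y) * ((l.*2.+1) * (l.*2.+2)))%N.
  have e1 : (c * ((l.*2.+1) * (l.*2.+2)) = (r.*2 - l.*2.+1) * (r.*2 - l.*2) * a)%N.
    have -> : (c * ((l.*2.+1) * (l.*2.+2)) = l.*2.+1 * (l.*2.+2 * c))%N by ring.
    rewrite h2.
    have -> : (l.*2.+1 * ((r.*2 - l.*2.+1) * b) = (r.*2 - l.*2.+1) * (l.*2.+1 * b))%N by ring.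
    by rewrite h1 mulnA.
  have e2 : (v * (4 * r * y) * ((l.*2.+1) * (l.*2.+2)) =
             (r - l) * u * (4 * r * y) * (2 * (l.*2.+1)))%N.
    rewrite -h3; have -> : (l.*2.+2 = 2 * l.+1)%N by lia.
    ring.
  rewrite e1 e2.
  have hr : (r.*2 - l.*2 = 2 * (r - l))%N by lia.
  rewrite hr.
  have : (r.*2 - l.*2.+1 <= 4 * r * (l.*2.+1))%N by lia.
  move=> h.
  have : ((r.*2 - l.*2.+1) * (2 * (r - l)) * a <= (4 * r * (l.*2.+1)) * (2 * (r - l)) * (u * y))%N.
    by apply: leq_mul => //; apply: leq_mul.
  move=> h'; apply: (leq_trans h'); apply: eq_leq; ring.
by rewrite leq_pmul2r in key.
Qed.

Lemma leq_expn a b e : (a <= b)%N -> (a ^ e <= b ^ e)%N.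
Proof. by move=> h; elim: e => [|e ih]; rewrite ?expn0 // !expnS leq_mul. Qed.

Lemma numbound m k r : (r <= m)%N ->
  (\sum_(l < r.+1) 'C(r.*2, l.*2) * 4 ^ l * (16 * m * k) ^ (r - l) <= (16 * m * k.+1) ^ r)%N.
Proof.
move=> hr.
rewrite [in X in (_ <= X)%N]expnMn -[k.+1]addn1 expnDn big_distrr /=.
apply: leq_sum => -[l hl] _ /=.
have hlr : (l <= r)%N by [].
rewrite exp1n muln1.
have hb := binC hlr.
have e : (16 * m) ^ r = (16 * m) ^ l * (16 * m) ^ (r - l) by rewrite -expnD subnKC.
rewrite e expnMn.
have h16 : ((4 * r) ^ l * 4 ^ l <= (16 * m) ^ l)%N.
  by rewrite -expnMn; apply: leq_expn; lia.
have : ('C(r.*2, l.*2) * 4 ^ l <= 'C(r, l) * (16 * m) ^ l)%N.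
  apply: (leq_trans (leq_mul hb (leqnn _))).
  by rewrite -mulnA leq_mul2l h16 orbT.
move=> h.
have := leq_mul h (leqnn ((16 * m) ^ (r - l) * k ^ (r - l))).
move=> h'; apply: (leq_trans h'); apply: eq_leq; ring.
Qed.

Local Open Scope ring_scope.

Definition FM (T : comPzRingType) (a c : T) (M : nat) : T :=
  M.+1%:R * (a ^+ M) ^+ 2 +
  \sum_(t < M) t.+1%:R * ((a + c) * a ^+ t * c ^+ (M.-1 - t)) ^+ 2.

Lemma FM_S (T : comPzRingType) (a c : T) M :
  FM a c M.+1 = c ^+ 2 * FM a c M + (a ^+ M) ^+ 2 * ((M.*2 + 3)%:R * a ^+ 2 + (M.*2 + 2)%:R * (a * c)).
Proof.
rewrite /FM big_ord_recr /= subnn expr0 mulr1 mulrDr mulr_sumr.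
have -> : \sum_(i < M) i.+1%:R * ((a + c) * a ^+ i * c ^+ (M - i)) ^+ 2 =
          \sum_(i < M) c ^+ 2 * (i.+1%:R * ((a + c) * a ^+ i * c ^+ (M.-1 - i)) ^+ 2).
  apply: eq_bigr => -[i hi] _ /=.
  have -> : (M - i = (M.-1 - i).+1)%N.
    by move: hi; case: M => // M' hj; rewrite /= subSn.
  rewrite (exprS c (M.-1 - i)).
  move: (c ^+ (M.-1 - i)) (a ^+ i) (i.+1%:R : T) => u w k; ring.
move: (\sum_(i < M) _) => S.
rewrite (exprS a M).
move: (a ^+ M) => x.
rewrite -[M.+2]addn2 -[M.+1]addn1 !natrD -!muln2 !natrM.
move: (M%:R : T) => m.
ring.
Qed.

Lemma jens_id (T : comPzRingType) (a c : T) M :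
  c ^+ (M.*2.+2) - a ^+ (M.*2.+2) - (M.*2.+2)%:R * (a ^+ (M.*2.+1) * (c - a))
  = (c - a) ^+ 2 * FM a c M.
Proof.
elim: M => [|M ih].
  rewrite /FM big_ord0 double0 /= expr0 expr1n addr0 mulr1; ring.
rewrite FM_S.
move: ih; move: (FM a c M) => F ih.
rewrite (_ : forall Z, (c - a) ^+ 2 * (c ^+ 2 * F + Z) = c ^+ 2 * ((c - a) ^+ 2 * F) + (c - a) ^+ 2 * Z); last by move=> Z; ring.
rewrite -ih.
have e1 : forall x : T, x ^+ (M.+1).*2.+2 = (x ^+ M) ^+ 2 * x ^+ 4.
  by move=> x; rewrite -exprM -exprD muln2 addnC.
have e2 : forall x : T, x ^+ (M.+1).*2.+1 = (x ^+ M) ^+ 2 * x ^+ 3.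
  by move=> x; rewrite -exprM -exprD muln2 addnC.
have e3 : forall x : T, x ^+ M.*2.+2 = (x ^+ M) ^+ 2 * x ^+ 2.
  by move=> x; rewrite -exprM -exprD muln2 addnC.
have e4 : forall x : T, x ^+ M.*2.+1 = (x ^+ M) ^+ 2 * x.
  by move=> x; rewrite -exprM -[in RHS](expr1 x) -exprD muln2 addnC.
rewrite !e1 !e2 !e3 !e4.
rewrite doubleS -[M.*2.+4]addn4 -[M.*2.+2]addn2 !natrD -!muln2 !natrM.
move: (M%:R : T) (a ^+ M) (c ^+ M) => m x y.
ring.
Qed.

Lemma sum_even (V : zmodType) (g : nat -> V) r : (forall i, odd i -> g i = 0) ->
  \sum_(i < r.*2.+1) g i = \sum_(l < r.+1) g (l.*2).
Proof.
move=> h; elim: r => [|r ih]; first by rewrite !big_ord_recr !big_ord0.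
rewrite doubleS big_ord_recr big_ord_recr /= ih [in RHS]big_ord_recr /=.
by rewrite (h r.*2.+1) ?addr0 //= odd_double.
Qed.

Section Cone.
Variable R : realType.
Variable n : nat.
Local Notation P := {mpoly R[n]}.
Local Notation q := (@cube_axioms R n).

Definition dle (d : nat) (f : P) := (msize f <= d.+1)%N.

Lemma dle_mono d d' f : (d <= d')%N -> dle d f -> dle d' f.
Proof. rewrite /dle => h1 h2; apply: (leq_trans h2); by rewrite ltnS. Qed.

Lemma dle0 d : dle d 0.
Proof. by rewrite /dle msize0. Qed.

Lemma dleD d f g : dle d f -> dle d g -> dle d (f + g).
Proof. rewrite /dle => h1 h2; apply: (leq_trans (msizeD_le _ _)); by rewrite geq_max h1 h2. Qed.

Lemma dleN d f : dle d f -> dle d (- f).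
Proof. by rewrite /dle msizeN. Qed.

Lemma dleB d f g : dle d f -> dle d g -> dle d (f - g).
Proof. by move=> h1 h2; apply: dleD => //; apply: dleN. Qed.

Lemma dleZ d c f : dle d f -> dle d (c *: f).
Proof. rewrite /dle => h; exact: (leq_trans (msizeZ_le _ _)). Qed.

Lemma dleM a b f g : dle a f -> dle b g -> dle (a + b) (f * g).
Proof.
rewrite /dle => h1 h2.
have [->|nf] := eqVneq f 0; first by rewrite mul0r msize0.
have [->|ng] := eqVneq g 0; first by rewrite mulr0 msize0.
rewrite msizeM //.
have p1 : (0 < msize f)%N by rewrite lt0n msize_poly_eq0.
have p2 : (0 < msize g)%N by rewrite lt0n msize_poly_eq0.
move: h1 h2 p1 p2; case: (msize f) => // x; case: (msize g) => // y /=.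
lia.
Qed.

Lemma dleX a f k : dle a f -> dle (a * k) (f ^+ k).
Proof.
move=> h; elim: k => [|k ih]; first by rewrite expr0 /dle msize1.
rewrite exprS mulnS; exact: dleM.
Qed.

Lemma dleC d c : dle d (c%:MP : P).
Proof. rewrite /dle msizeC; case: (c != 0) => //. Qed.

Lemma dle1 d : dle d (1 : P).
Proof. by rewrite /dle msize1. Qed.

Lemma dleXi i : dle 1 ('X_i : P).
Proof. by rewrite /dle msizeX mdeg1. Qed.

Lemma dle_sum d (I : Type) (r : seq I) (Q : pred I) (F : I -> P) :
  (forall i, Q i -> dle d (F i)) -> dle d (\sum_(i <- r | Q i) F i).
Proof.
move=> h; elim/big_rec: _ => [|i x Qi hx]; first exact: dle0.
by apply: dleD => //; apply: h.
Qed.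

Lemma dleMn d f k : dle d f -> dle d (f *+ k).
Proof. move=> h; elim: k => [|k ih]; first by rewrite mulr0n; exact: dle0.
by rewrite mulrS; apply: dleD. Qed.

Definition cone (d : nat) (f : P) : Prop :=
  exists (s : 'I_n -> P) (gs : seq P),
    [/\ f = \sum_(i < n) s i * q i + \sum_(g <- gs) g ^+ 2,
        (forall i, dle d (s i * q i))
      & (forall g, g \in gs -> dle d (g ^+ 2))].

Lemma cone0 d : cone d 0.
Proof.
exists (fun _ => 0), [::]; split.
- by rewrite big_nil addr0 big1 // => i _; rewrite mul0r.
- by move=> i; rewrite mul0r; exact: dle0.
- by [].
Qed.

Lemma coneD d f g : cone d f -> cone d g -> cone d (f + g).
Proof.
move=> [s1 [gs1 [e1 h1 k1]]] [s2 [gs2 [e2 h2 k2]]].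
exists (fun i => s1 i + s2 i), (gs1 ++ gs2); split.
- have -> : \sum_(i < n) (s1 i + s2 i) * q i =
     \sum_(i < n) s1 i * q i + \sum_(i < n) s2 i * q i.
    by rewrite -big_split /=; apply: eq_bigr => i _; rewrite mulrDl.
  by rewrite e1 e2 big_cat /= addrACA.
- by move=> i; rewrite mulrDl; apply: dleD.
- by move=> x; rewrite mem_cat => /orP [] ?; [apply: k1|apply: k2].
Qed.

Lemma cone_sum d (I : Type) (r : seq I) (Q : pred I) (F : I -> P) :
  (forall i, Q i -> cone d (F i)) -> cone d (\sum_(i <- r | Q i) F i).
Proof.
move=> h; elim/big_rec: _ => [|i x Qi hx]; first exact: cone0.
by apply: coneD => //; apply: h.
Qed.

Lemma coneMn d f k : cone d f -> cone d (f *+ k).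
Proof. move=> h; elim: k => [|k ih]; first by rewrite mulr0n; exact: cone0.
by rewrite mulrS; apply: coneD. Qed.

Lemma coneZ d c f : 0 <= c -> cone d f -> cone d (c *: f).
Proof.
move=> c0 [s1 [gs1 [e1 h1 k1]]].
exists (fun i => c *: s1 i), (map (fun g => Num.sqrt c *: g) gs1); split.
- rewrite e1 scalerDr scaler_sumr big_map; congr (_ + _).
    by apply: eq_bigr => i _; rewrite scalerAl.
  rewrite scaler_sumr; apply: eq_bigr => g _.
  by rewrite exprZn sqr_sqrtr.
- by move=> i; rewrite -scalerAl; apply: dleZ.
- move=> x /mapP [g gin ->]; rewrite exprZn; apply: dleZ; exact: k1.
Qed.

Lemma cone_sq d g : dle d (g ^+ 2) -> cone d (g ^+ 2).
Proof.
move=> h; exists (fun _ => 0), [:: g]; split.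
- by rewrite big_seq1 big1 ?add0r // => i _; rewrite mul0r.
- by move=> i; rewrite mul0r; exact: dle0.
- by move=> x; rewrite inE => /eqP ->.
Qed.

Lemma cone_ideal d (h : P) i : dle d (h * q i) -> cone d (h * q i).
Proof.
move=> hd; exists (fun j => if j == i then h else 0), [::]; split.
- rewrite big_nil addr0 (bigD1 i) //= eqxx big1 ?addr0 // => j /negbTE ->.
  by rewrite mul0r.
- move=> j; case: eqP => [->|_] //; rewrite mul0r; exact: dle0.
- by [].
Qed.

Lemma cone_mono d d' f : (d <= d')%N -> cone d f -> cone d' f.
Proof.
move=> le [s1 [gs1 [e1 h1 k1]]]; exists s1, gs1; split => //.
- by move=> i; apply: dle_mono le _.
- by move=> g gi; apply: dle_mono le _; apply: k1.
Qed.

Lemma cone_mulsq e d (h : P) f : dle e h -> cone d f -> cone (e * 2 + d) (h ^+ 2 * f).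
Proof.
move=> he [s1 [gs1 [e1 h1 k1]]].
exists (fun i => h ^+ 2 * s1 i), (map (fun g => h * g) gs1); split.
- rewrite e1 mulrDr mulr_sumr big_map mulr_sumr; congr (_ + _).
    by apply: eq_bigr => i _; rewrite mulrA.
  by apply: eq_bigr => g _; rewrite exprMn.
- by move=> i; rewrite -mulrA; apply: dleM => //; exact: dleX.
- move=> x /mapP [g gin ->]; rewrite exprMn; apply: dleM; [exact: dleX|exact: k1].
Qed.

Lemma cone_const d c : 0 <= c -> cone d (c *: 1).
Proof.
move=> c0; apply: coneZ => //; rewrite -[1 : P](expr1n _ 2).
by apply: cone_sq; rewrite expr1n; exact: dle1.
Qed.

Lemma cone_sos d f : cone d f -> @sos_proves R n n d q f.
Proof.
move=> [s1 [gs1 [e1 h1 k1]]]; exists s1, gs1; split => //.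
rewrite big_seq; apply: dle_sum => g; exact: k1.
Qed.

Lemma dle_sq e (g : P) : dle e g -> dle (e * 2) (g ^+ 2).
Proof. exact: dleX. Qed.

Lemma FM_cone (a c : P) M : dle 1 a -> dle 1 c -> cone (M.*2.+2) ((c - a) ^+ 2 * FM a c M).
Proof.
move=> ha hc.
have -> : (c - a) ^+ 2 * FM a c M =
   ((c - a) * a ^+ M) ^+ 2 *+ M.+1 +
   \sum_(t < M) ((c - a) * (a + c) * a ^+ t * c ^+ (M.-1 - t)) ^+ 2 *+ t.+1.
  rewrite /FM mulrDr mulr_sumr; congr (_ + _).
    by rewrite -[in RHS]mulr_natl; move: (M.+1%:R : P) (a ^+ M) => k x; ring.
  apply: eq_bigr => -[t ht] _ /=; rewrite -[in RHS]mulr_natl.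
  by move: (t.+1%:R : P) (a ^+ t) (c ^+ (M.-1 - t)) => k x y; ring.
apply: coneD.
  apply: coneMn; apply: cone_sq; apply: (@dle_mono ((1 + 1 * M) * 2)); first by lia.
  apply: dle_sq; apply: dleM; first by apply: dleB.
  exact: dleX.
apply: cone_sum => -[t ht] _ /=; apply: coneMn; apply: cone_sq.
apply: (@dle_mono ((1 + 1 + 1 * t + 1 * (M.-1 - t)) * 2)); first by lia.
apply: dle_sq; apply: dleM; last exact: dleX.
apply: dleM; last exact: dleX.
by apply: dleM; [apply: dleB|apply: dleD].
Qed.

Lemma jensen (w : 'I_n -> R) (U : 'I_n -> P) r :
  (forall b, 0 <= w b) -> \sum_b w b = 1 -> (forall b, dle 1 (U b)) ->
  cone (r.*2) (\sum_b w b *: U b ^+ r.*2 - (\sum_b w b *: U b) ^+ r.*2).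
Proof.
move=> w0 w1 hU; case: r => [|M].
  rewrite double0 expr0.
  under eq_bigr do rewrite expr0.
  by rewrite -scaler_suml w1 scale1r subrr; exact: cone0.
rewrite doubleS; set a := \sum_b w b *: U b.
have ha : dle 1 a by apply: dle_sum => b _; apply: dleZ.
have -> : \sum_b w b *: U b ^+ M.*2.+2 - a ^+ M.*2.+2 =
          \sum_b w b *: ((U b - a) ^+ 2 * FM a (U b) M).
  under [RHS]eq_bigr do rewrite -jens_id.
  have e : forall b, w b *: (U b ^+ M.*2.+2 - a ^+ M.*2.+2 -
                          (M.*2.+2)%:R * (a ^+ M.*2.+1 * (U b - a))) =
       w b *: U b ^+ M.*2.+2 - w b *: a ^+ M.*2.+2 -
       (M.*2.+2)%:R * (a ^+ M.*2.+1 * (w b *: U b - w b *: a)).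
    by move=> b; rewrite !scalerBr (scalerAr (w b) ((M.*2.+2)%:R)) (scalerAr (w b) (a ^+ _)) scalerBr.
  under [RHS]eq_bigr do rewrite e.
  rewrite !sumrB -!mulr_sumr -!scaler_suml w1 scale1r.
  have -> : \sum_b (w b *: U b - w b *: a) = 0.
    by rewrite sumrB -scaler_suml w1 scale1r subrr.
  by rewrite !mulr0 subr0.
apply: cone_sum => b _; apply: coneZ => //; exact: FM_cone.
Qed.

End Cone.

Section Main.
Variable R : realType.
Variable n : nat.
Variable p : 'I_n -> R.
Hypothesis p0 : forall i, 0 <= p i.
Hypothesis p1 : \sum_i p i = 1.
Local Notation P := {mpoly R[n]}.
Local Notation q := (@cube_axioms R n).

Definition ell : P := \sum_b p b *: 'X_b.
Definition Xv (a : 'I_n) : P := 'X_a - ell.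
Definition Pz k (z : {ffun 'I_k -> 'I_n}) : R := \prod_(nu < k) p (z nu).
Definition Sz k (z : {ffun 'I_k -> 'I_n}) : P := \sum_(nu < k) Xv (z nu).
Definition Ek k (F : P -> P) : P := \sum_(z : {ffun 'I_k -> 'I_n}) Pz z *: F (Sz z).

Lemma Pz_ge0 k z : 0 <= @Pz k z.
Proof. by apply: prodr_ge0 => i _. Qed.

Lemma dle_ell : dle 1 ell.
Proof. by apply: dle_sum => b _; apply: dleZ; apply: dleXi. Qed.

Lemma dle_Xv a : dle 1 (Xv a).
Proof. by apply: dleB; [apply: dleXi|apply: dle_ell]. Qed.

Lemma dle_Sz k z : dle 1 (@Sz k z).
Proof. by apply: dle_sum => i _; apply: dle_Xv. Qed.

Lemma Ek_split k F : Ek k.+1 F = \sum_a p a *: Ek k (fun x => F (Xv a + x)).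
Proof.
rewrite /Ek.
pose h (az : 'I_n * {ffun 'I_k -> 'I_n}) : {ffun 'I_k.+1 -> 'I_n} :=
  [ffun i => if unlift ord0 i is Some j then az.2 j else az.1].
pose g (y : {ffun 'I_k.+1 -> 'I_n}) := (y ord0, [ffun j => y (lift ord0 j)]).
have hg : cancel g h.
  move=> y; apply/ffunP => i; rewrite ffunE; case: unliftP => [j ->|->] /=.
    by rewrite ffunE.
  by [].
have gh : cancel h g.
  case=> a z; rewrite /g /h /= ffunE unlift_none; congr pair.
  by apply/ffunP => j; rewrite !ffunE liftK.
rewrite (reindex h); last by apply: onW_bij; exists g.
under [RHS]eq_bigr do rewrite scaler_sumr.
rewrite pair_bigA; apply: eq_bigr => -[a z] _ /=.
rewrite scalerA /Pz /Sz !big_ord_recl /h /= !ffunE unlift_none.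
congr (_ *: F (_ + _)).
  by congr (_ * _); apply: eq_bigr => j _; rewrite ffunE liftK.
by apply: eq_bigr => j _; rewrite ffunE liftK.
Qed.

Lemma Ek0 F : Ek 0 F = F 0.
Proof.
rewrite /Ek /Pz /Sz.
under eq_bigr do rewrite !big_ord0 scale1r.
by rewrite sumr_const card_ffun !card_ord.
Qed.

Lemma Ek_mono d k F G : (forall x, dle 1 x -> cone d (G x - F x)) ->
  cone d (Ek k G - Ek k F).
Proof.
move=> h; rewrite /Ek -sumrB; apply: cone_sum => z _.
by rewrite -scalerBr; apply: coneZ; [apply: Pz_ge0|apply: h; apply: dle_Sz].
Qed.


Lemma dle_natP d k : dle d (k%:R : P).
Proof. by apply: dleMn; apply: dle1. Qed.

Definition Dd (a b : 'I_n) : P := 'X_a - 'X_b.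

Lemma dle_Dd a b : dle 1 (Dd a b).
Proof. by apply: dleB; apply: dleXi. Qed.

Lemma cone4 a b : cone 2 ((4 : R) *: 1 - Dd a b ^+ 2).
Proof.
have -> : (4 : R) *: 1 - Dd a b ^+ 2 =
   ('X_a + 'X_b) ^+ 2 + ((- 2%:R) * q a + (- 2%:R) * q b).
  by rewrite /cube_axioms /Dd scaler_nat; ring.
have hq : forall i, dle 2 ((- 2%:R) * q i).
  move=> i; apply: (dle_mono (d:=0 + 2)) => //; apply: dleM.
    by apply: dleN; apply: dle_natP.
  rewrite /cube_axioms; apply: dleB; last exact: dle1.
  by apply: (dle_mono (d:=1 * 2)) => //; apply: dleX; apply: dleXi.
apply: coneD.
  apply: cone_sq; apply: (dle_mono (d:=1 * 2)) => //; apply: dle_sq.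
  by apply: dleD; apply: dleXi.
by apply: coneD; apply: cone_ideal.
Qed.

Lemma coneD4 a b l : cone (l.*2) ((4 : R) ^+ l *: 1 - Dd a b ^+ (l.*2)).
Proof.
elim: l => [|l ih].
  by rewrite double0 !expr0 scale1r subrr; apply: cone0.
have e : (4 : R) ^+ l.+1 *: 1 - Dd a b ^+ (l.+1).*2 =
   (4 : R) *: ((4 : R) ^+ l *: 1 - Dd a b ^+ (l.*2)) +
   (Dd a b ^+ l) ^+ 2 * ((4 : R) *: 1 - Dd a b ^+ 2).
  rewrite doubleS exprS -scalerA -exprM muln2.
  rewrite (_ : Dd a b ^+ l.*2.+2 = Dd a b ^+ l.*2 * Dd a b ^+ 2); last first.
    by rewrite -exprD addn2.
  move: (Dd a b ^+ l.*2) (Dd a b ^+ 2) => y D2.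
  rewrite scalerBr mulrBr -scalerAr mulr1.
  by rewrite addrA subrK.
rewrite e; apply: coneD.
  apply: coneZ => //; apply: (cone_mono _ ih); rewrite doubleS; lia.
apply: (cone_mono (d:=l * 2 + 2)); first by rewrite doubleS; lia.
apply: cone_mulsq; last exact: cone4.
by apply: (dle_mono (d:=1 * l)); [lia|apply: dleX; apply: dle_Dd].
Qed.

Definition nu j : P := \sum_a \sum_b (p a * p b) *: Dd a b ^+ j.

Lemma nu_odd j : odd j -> nu j = 0.
Proof.
move=> hj.
have h : nu j = - nu j.
  rewrite {1}/nu exchange_big /= /nu -sumrN; apply: eq_bigr => x _.
  rewrite -sumrN; apply: eq_bigr => y _.
  rewrite mulrC -scalerN; congr (_ *: _).
  rewrite /Dd -opprB exprNn -signr_odd hj mulr_sign //.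
have h2 : (2 : R) *: nu j = 0.
  by rewrite scaler_nat mulr2n {1}h addNr.
move/eqP: h2; rewrite scaler_eq0 => /orP [|/eqP //].
by rewrite pnatr_eq0.
Qed.

Lemma sum_pp : \sum_a \sum_b (p a * p b) = 1.
Proof.
under eq_bigr do rewrite -mulr_sumr p1 mulr1.
exact: p1.
Qed.

Lemma nu_bound l : cone (l.*2) ((4 : R) ^+ l *: 1 - nu (l.*2)).
Proof.
have -> : (4 : R) ^+ l *: 1 - nu (l.*2) =
   \sum_a \sum_b (p a * p b) *: ((4 : R) ^+ l *: 1 - Dd a b ^+ (l.*2)).
  under [RHS]eq_bigr do (under eq_bigr do rewrite scalerBr; rewrite sumrB).
  rewrite sumrB /nu; congr (_ - _).
  under eq_bigr do rewrite -scaler_suml.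
  by rewrite -scaler_suml sum_pp scale1r.
apply: cone_sum => a _; apply: cone_sum => b _.
by apply: coneZ; [apply: mulr_ge0|apply: coneD4].
Qed.


Lemma G_eq (x : P) r :
  \sum_a p a *: \sum_b p b *: (x + Dd a b) ^+ r.*2 =
  \sum_(l < r.+1) (x ^+ (r - l).*2 * nu (l.*2)) *+ 'C(r.*2, l.*2).
Proof.
have -> : \sum_a p a *: \sum_b p b *: (x + Dd a b) ^+ r.*2 =
    \sum_(i < r.*2.+1) (x ^+ (r.*2 - i) * nu i) *+ 'C(r.*2, i).
  rewrite /nu.
  under eq_bigr do (rewrite scaler_sumr; under eq_bigr do rewrite scalerA exprDn scaler_sumr).
  under eq_bigr do rewrite exchange_big /=.
  rewrite exchange_big /=; apply: eq_bigr => i _.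
  rewrite mulr_sumr -sumrMnl; apply: eq_bigr => a _.
  rewrite mulr_sumr -sumrMnl; apply: eq_bigr => b _.
  by rewrite -scalerMnr scalerAr.
rewrite (sum_even (g := fun i => (x ^+ (r.*2 - i) * nu i) *+ 'C(r.*2, i))); last first.
  by move=> i hi; rewrite nu_odd // mulr0 mul0rn.
by apply: eq_bigr => -[l hl] _ /=; rewrite -doubleB.
Qed.

Lemma sum_pX a (x : P) : \sum_b p b *: (x + Dd a b) = Xv a + x.
Proof.
rewrite /Dd /Xv /ell.
under eq_bigr do rewrite !scalerDr scalerN.
rewrite !big_split /= -!scaler_suml p1 !scale1r sumrN.
by rewrite addrC.
Qed.


Lemma chain4 (V : zmodType) (a b c d e : V) :
  a - e = (a - b) + ((b - c) + ((c - d) + (d - e))).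
Proof. by rewrite !addrA !subrK. Qed.

Lemma main_bound m k r : (r <= m)%N ->
  cone (r.*2) (((16 * m * k)%:R : R) ^+ r *: 1 - Ek k (fun x => x ^+ r.*2)).
Proof.
elim: k r => [|k ih] r hr.
  rewrite Ek0 muln0 !expr0n /=; case: r hr => [|r] hr /=.
    by rewrite scale1r subrr; apply: cone0.
  by rewrite scale0r subrr; apply: cone0.
pose c l := ('C(r.*2, l.*2) * 4 ^ l)%N.
have E4 : Ek k.+1 (fun x => x ^+ r.*2) = Ek k (fun x => \sum_a p a *: (Xv a + x) ^+ r.*2).
  rewrite Ek_split /Ek.
  under eq_bigr do rewrite scaler_sumr.
  rewrite exchange_big /=; apply: eq_bigr => z _.
  rewrite scaler_sumr; apply: eq_bigr => a _.
  by rewrite !scalerA mulrC.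
have E3 : cone (r.*2)
   (Ek k (fun x => \sum_(l < r.+1) (x ^+ (r - l).*2 * nu (l.*2)) *+ 'C(r.*2, l.*2)) -
    Ek k (fun x => \sum_a p a *: (Xv a + x) ^+ r.*2)).
  apply: Ek_mono => x hx; rewrite -G_eq -sumrB.
  apply: cone_sum => a _; rewrite -scalerBr; apply: coneZ => //.
  rewrite -(sum_pX a x); apply: jensen => // b.
  by apply: dleD => //; apply: dle_Dd.
have E2 : cone (r.*2)
   (Ek k (fun x => \sum_(l < r.+1) (c l)%:R *: x ^+ (r - l).*2) -
    Ek k (fun x => \sum_(l < r.+1) (x ^+ (r - l).*2 * nu (l.*2)) *+ 'C(r.*2, l.*2))).
  apply: Ek_mono => x hx; rewrite -sumrB; apply: cone_sum => -[l hl] _ /=.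
  have -> : (c l)%:R *: x ^+ (r - l).*2 - (x ^+ (r - l).*2 * nu l.*2) *+ 'C(r.*2, l.*2) =
      ('C(r.*2, l.*2))%:R *: ((x ^+ (r - l)) ^+ 2 * ((4 : R) ^+ l *: 1 - nu l.*2)).
    rewrite /c natrM natrX -scalerA -exprM muln2 mulrBr -scalerAr mulr1 scalerBr.
    by rewrite !scaler_nat.
  apply: coneZ; first exact: ler0n.
  apply: (cone_mono (d := (r - l) * 2 + l.*2)); first by lia.
  apply: cone_mulsq; last exact: nu_bound.
  by apply: (dle_mono (d := 1 * (r - l))); [lia|apply: dleX].
have E1' : Ek k (fun x => \sum_(l < r.+1) (c l)%:R *: x ^+ (r - l).*2) =
    \sum_(l < r.+1) (c l)%:R *: Ek k (fun x => x ^+ (r - l).*2).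
  rewrite /Ek; under eq_bigr do rewrite scaler_sumr.
  rewrite exchange_big /=; apply: eq_bigr => l _.
  rewrite scaler_sumr; apply: eq_bigr => z _.
  by rewrite !scalerA mulrC.
have E1 : cone (r.*2)
   (\sum_(l < r.+1) ((c l)%:R * ((16 * m * k)%:R : R) ^+ (r - l)) *: 1 -
    \sum_(l < r.+1) (c l)%:R *: Ek k (fun x => x ^+ (r - l).*2)).
  rewrite -sumrB; apply: cone_sum => -[l hl] _ /=.
  rewrite -scalerA -scalerBr; apply: coneZ; first exact: ler0n.
  apply: (cone_mono (d := (r - l).*2)); first by lia.
  by apply: ih; lia.
have E0 : cone (r.*2)
   (((16 * m * k.+1)%:R : R) ^+ r *: (1 : P) -
    \sum_(l < r.+1) ((c l)%:R * ((16 * m * k)%:R : R) ^+ (r - l)) *: (1 : P)).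
  rewrite -scaler_suml -scalerBl; apply: cone_const; rewrite subr_ge0.
  have -> : \sum_(l < r.+1) ((c l)%:R * ((16 * m * k)%:R : R) ^+ (r - l)) =
            (\sum_(l < r.+1) c l * (16 * m * k) ^ (r - l))%:R.
    by rewrite natr_sum; apply: eq_bigr => l _; rewrite !natrM !natrX !natrM.
  by rewrite -natrX ler_nat; apply: numbound.
rewrite E4 (chain4 _ (\sum_(l < r.+1) ((c l)%:R * ((16 * m * k)%:R : R) ^+ (r - l)) *: (1 : P))
   (Ek k (fun x => \sum_(l < r.+1) (c l)%:R *: x ^+ (r - l).*2))
   (Ek k (fun x => \sum_(l < r.+1) (x ^+ (r - l).*2 * nu (l.*2)) *+ 'C(r.*2, l.*2)))).
apply: coneD => //; apply: coneD; first by rewrite E1'.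
by apply: coneD.
Qed.


Lemma freq_lin k (z : {ffun 'I_k -> 'I_n}) : k != 0%N ->
  \sum_j (freq R z j - p j) *: ('X_j : P) = (k%:R)^-1 *: Sz z.
Proof.
move=> hk.
have hk' : (k%:R : R) != 0 by rewrite pnatr_eq0.
have ecard j : #|[set nu | z nu == j]| = (\sum_(nu | z nu == j) 1)%N.
  by rewrite -sum1_card; apply: eq_bigl => nu; rewrite inE.
have e1 : \sum_j freq R z j *: ('X_j : P) = (k%:R)^-1 *: \sum_nu 'X_(z nu).
  have -> : \sum_nu ('X_(z nu) : P) = \sum_nu \sum_j (if z nu == j then 'X_j else 0).
    apply: eq_bigr => nu _; rewrite -big_mkcond /=.
    by rewrite (big_pred1 (z nu)) // => j; rewrite /= eq_sym.
  rewrite exchange_big scaler_sumr /=; apply: eq_bigr => j _.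
  rewrite -big_mkcond /= /freq ecard natr_sum.
  by rewrite mulrC -scalerA scaler_suml scale1r.
under eq_bigr do rewrite scalerBl.
rewrite sumrB e1 /Sz /Xv sumrB scalerBr sumr_const card_ord -scaler_nat scalerA.
by rewrite mulVf // scale1r.
Qed.

End Main.

Unset Implicit Arguments.
Theorem lemma3p9 (R : realType) (n k : nat) (p : 'I_n -> R) :
  in_simplex p ->
  forall s : nat, ~~ odd s -> (2 <= s)%N -> (s <= k)%N ->
    @sos_proves R n n s (@cube_axioms R n)
      (((8 * s)%:R / k%:R) ^+ (s./2) *: 1 - @mul_moment R n k p s).
Proof.
move=> [p0 p1] s hodd hs2 hsk.
set m := s./2.
have hs : s = m.*2.
  by have := odd_double_half s; rewrite (negbTE hodd) add0n => <-.
have hk : k != 0%N by rewrite -lt0n; apply: leq_trans hsk; apply: leq_trans hs2.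
have hk' : (k%:R : R) != 0 by rewrite pnatr_eq0.
apply: cone_sos.
have emul : mul_moment k p s = ((k%:R)^-1 ^+ s : R) *: Ek p k (fun x => x ^+ s).
  rewrite /mul_moment /Ek scaler_sumr; apply: eq_bigr => z _.
  by rewrite (freq_lin p z hk) exprZn scalerA scalerA mulrC.
have econst : ((8 * s)%:R / k%:R : R) ^+ m = (k%:R)^-1 ^+ s * ((16 * m * k)%:R) ^+ m.
  have e8 : ((8 * s)%:R / k%:R : R) = (k%:R)^-1 ^+ 2 * (16 * m * k)%:R.
    rewrite hs -muln2 !natrM; field; exact: hk'.
  by rewrite e8 exprMn -exprM hs -muln2 mulnC.
rewrite emul econst -scalerA -scalerBr.
apply: coneZ; first by apply: exprn_ge0; rewrite invr_ge0 ler0n.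
rewrite hs; apply: main_bound => //.
Qed.
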